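(* Let $d>1$ and $N\ge 1$. Suppose $x_1,\dots,x_N\in\mathbb{H}^d$ and $w_1,\dots,w_N\in\mathbb{R}$ satisfy: (1) $|x_i|^2=1$ for $i=1,\dots,N$; (2) $|\langle x_i,x_j\rangle|^2=|\langle x_{i'},x_{j'}\rangle|^2$ for all $1\le i<j\le N$ and $1\le i'<j'\le N$; (3) $\sum_{i=1}^N w_i x_ix_i^\dagger = I_d$. Then $w_1=\cdots=w_N=d/N$ and $\{x_1,\dots,x_N\}$ is a tight simplex in $\mathbb{H}\mathbb{P}^{d-1}$.
   Context: $\mathbb{H}$ denotes the quaternions; $\langle x,y\rangle=x^\dagger y$ on $\mathbb{H}^d$, with $\dagger$ the conjugate transpose. $\mathbb{H}\mathbb{P}^{d-1}$ is the space of quaternionic lines in $\mathbb{H}^d$ (scalars acting on the right), points represented by unit vectors. A tight simplex of $N$ points in $\mathbb{H}\mathbb{P}^{d-1}$ is a set of $N$ distinct points $x_1,\dots,x_N$ with $|\langle x_i,x_j\rangle|^2=\frac{N-d}{d(N-1)}$ for all $i\ne j$. *)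

(* Defs.v *)
From mathcomp Require Import all_boot all_order all_algebra.
Set Implicit Arguments. Unset Strict Implicit. Unset Printing Implicit Defensive.
Import Order.TTheory GRing.Theory Num.Theory.
Local Open Scope ring_scope.

Record quat (R : realFieldType) := Quat { qre : R; qi : R; qj : R; qk : R }.

Section Quat.
Variable R : realFieldType.

Definition q0 : quat R := Quat 0 0 0 0.
Definition q1 : quat R := Quat 1 0 0 0.
Definition qadd (p q : quat R) : quat R :=
  Quat (qre p + qre q) (qi p + qi q) (qj p + qj q) (qk p + qk q).
Definition qmul (p q : quat R) : quat R :=
  Quat (qre p * qre q - qi p * qi q - qj p * qj q - qk p * qk q)
       (qre p * qi q + qi p * qre q + qj p * qk q - qk p * qj q)
       (qre p * qj q - qi p * qk q + qj p * qre q + qk p * qi q)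
       (qre p * qk q + qi p * qj q - qj p * qi q + qk p * qre q).
Definition qconj (p : quat R) : quat R := Quat (qre p) (- qi p) (- qj p) (- qk p).
Definition qscale (a : R) (p : quat R) : quat R :=
  Quat (a * qre p) (a * qi p) (a * qj p) (a * qk p).
Definition qnorm2 (p : quat R) : R :=
  qre p ^+ 2 + qi p ^+ 2 + qj p ^+ 2 + qk p ^+ 2.

Definition hinner (d : nat) (x y : 'I_d -> quat R) : quat R :=
  \big[qadd/q0]_(k < d) qmul (qconj (x k)) (y k).
Definition hnorm2 (d : nat) (x : 'I_d -> quat R) : R :=
  \sum_(k < d) qnorm2 (x k).

Definition same_line (d : nat) (x y : 'I_d -> quat R) : Prop :=
  exists l : quat R, l <> q0 /\ forall k, y k = qmul (x k) l.

Definition tight_simplex (d N : nat) (x : 'I_N -> 'I_d -> quat R) : Prop :=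
  (forall i, hnorm2 (x i) = 1) /\
  (forall i j : 'I_N, i != j -> ~ same_line (x i) (x j)) /\
  (forall i j : 'I_N, i != j ->
     qnorm2 (hinner (x i) (x j)) = (N%:R - d%:R) / (d%:R * (N%:R - 1))).

End Quat.

(* Main.v *)
Require Import Defs.
From mathcomp Require Import all_boot all_order all_algebra.
From mathcomp Require Import ring.
Import Order.TTheory GRing.Theory Num.Theory.
Local Open Scope ring_scope.

Section Aux.
Variable R : realFieldType.
Implicit Types p q u v l : quat R.

Lemma bigq_morph (f : quat R -> R) :
  (forall p q, f (qadd p q) = f p + f q) -> f (q0 R) = 0 ->
  forall n (F : 'I_n -> quat R),
  f (\big[@qadd R/q0 R]_(i < n) F i) = \sum_(i < n) f (F i).
Proof. by move=> Hm H0 n F; apply: (big_morph f Hm H0). Qed.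

Lemma qconj_big n (F : 'I_n -> quat R) :
  qconj (\big[@qadd R/q0 R]_(i < n) F i) = \big[@qadd R/q0 R]_(i < n) qconj (F i).
Proof.
apply: (big_morph (@qconj R)).
  by move=> p q; rewrite /qconj /qadd /=; congr Quat; ring.
by rewrite /qconj /q0 /=; congr Quat; ring.
Qed.

Lemma qnorm2M p q : qnorm2 (qmul p q) = qnorm2 p * qnorm2 q.
Proof. rewrite /qnorm2 /qmul /=; ring. Qed.

Lemma hinner_self d (y : 'I_d -> quat R) : hnorm2 y = 1 -> qnorm2 (hinner y y) = 1.
Proof.
move=> H.
have e1 : qre (hinner y y) = 1.
  rewrite /hinner bigq_morph //.
  rewrite -H /hnorm2; apply: eq_bigr => k _; rewrite /qnorm2 /qmul /qconj /=; ring.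
have e0 : forall f : quat R -> R, (forall p q, f (qadd p q) = f p + f q) -> f (q0 R) = 0 ->
   (forall p, f (qmul (qconj p) p) = 0) -> f (hinner y y) = 0.
  move=> f Hm H0 Hp; rewrite /hinner bigq_morph //; by apply: big1 => k _.
rewrite /qnorm2 e1 (e0 (@qi R)) ?(e0 (@qj R)) ?(e0 (@qk R)) //;
  try (by move=> p q); try (by move=> p; rewrite /qmul /qconj /=; ring).
by rewrite expr1n expr0n /= !addr0.
Qed.

Lemma hinner_line d (x y : 'I_d -> quat R) :
  hnorm2 x = 1 -> hnorm2 y = 1 -> same_line x y -> qnorm2 (hinner x y) = 1.
Proof.
move=> Hx Hy [l [_ Hl]].
have Hl1 : qnorm2 l = 1.
  rewrite -Hy /hnorm2 (eq_bigr (fun k => qnorm2 (x k) * qnorm2 l)); last first.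
    by move=> k _; rewrite Hl qnorm2M.
  by rewrite -mulr_suml -/(hnorm2 x) Hx mul1r.
have C : forall f : quat R -> R, (forall p q, f (qadd p q) = f p + f q) -> f (q0 R) = 0 ->
   (forall p, f (qmul (qconj p) (qmul p l)) = qnorm2 p * f l) -> f (hinner x y) = f l.
  move=> f Hm H0 Hp; rewrite /hinner bigq_morph //.
  rewrite (eq_bigr (fun k => qnorm2 (x k) * f l)); last by move=> k _; rewrite Hl Hp.
  by rewrite -mulr_suml -/(hnorm2 x) Hx mul1r.
rewrite /qnorm2 (C (@qre R)) ?(C (@qi R)) ?(C (@qj R)) ?(C (@qk R)) //;
  try (by move=> p q); try (by move=> p; rewrite /qnorm2 /qmul /qconj /=; ring).
Qed.

Lemma qnorm2_hinner d (y z : 'I_d -> quat R) : qnorm2 (hinner y z) =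
  \sum_(a < d) \sum_(b < d) qre (qmul (qmul (qconj (y a)) (z a)) (qmul (qconj (z b)) (y b))).
Proof.
have -> : qnorm2 (hinner y z) = qre (qmul (hinner y z) (qconj (hinner y z))).
  by rewrite /qnorm2 /qmul /qconj /=; ring.
rewrite {2}/hinner qconj_big.
rewrite (@bigq_morph (fun u => qre (qmul (hinner y z) u))); first last.
- by rewrite /qmul /q0 /=; ring.
- by move=> p q; rewrite /qmul /qadd /=; ring.
rewrite exchange_big; apply: eq_bigr => b _.
rewrite /hinner (@bigq_morph (fun u => qre (qmul u (qconj (qmul (qconj (y b)) (z b)))))); first last.
- by rewrite /qmul /q0 /=; ring.
- by move=> p q; rewrite /qmul /qadd /=; ring.
apply: eq_bigr => a _.
by rewrite /qmul /qconj /=; ring.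
Qed.

End Aux.

Theorem proposition4p1 (R : realFieldType) (d N : nat)
  (hd : (1 < d)%N) (hN : (1 <= N)%N)
  (x : 'I_N -> 'I_d -> quat R) (w : 'I_N -> R)
  (h1 : forall i, hnorm2 (x i) = 1)
  (h2 : forall i j i' j' : 'I_N, (i < j)%N -> (i' < j')%N ->
          qnorm2 (hinner (x i) (x j)) = qnorm2 (hinner (x i') (x j')))
  (h3 : forall a b : 'I_d,
          \big[@qadd R/q0 R]_(i < N) qscale (w i) (qmul (x i a) (qconj (x i b)))
          = (if a == b then q1 R else q0 R)) :
  (forall i, w i = d%:R / N%:R) /\ tight_simplex x.
Proof.
pose n i j := qnorm2 (hinner (x i) (x j)).
have Hdiag : forall i, n i i = 1 by move=> i; apply: hinner_self.
have Hsym : forall i j, n i j = n j i.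
  move=> i j; rewrite /n.
  have -> : hinner (x j) (x i) = qconj (hinner (x i) (x j)).
    rewrite /hinner qconj_big; apply: eq_bigr => k _.
    by rewrite /qconj /qmul /=; congr Quat; ring.
  by rewrite /qnorm2 /qconj /=; ring.
have Htr : \sum_i w i = d%:R.
  have E : forall a, \sum_i w i * qnorm2 (x i a) = 1.
    move=> a; have := congr1 (@qre R) (h3 a a); rewrite eqxx /= bigq_morph //.
    move=> <-; apply: eq_bigr => i _; rewrite /qscale /qnorm2 /qmul /qconj /=; ring.
  transitivity (\sum_(a < d) \sum_i w i * qnorm2 (x i a)); last first.
    by under eq_bigr do rewrite E; rewrite sumr_const card_ord.
  rewrite exchange_big /=.
  by apply: eq_bigr => i _; rewrite -mulr_sumr -/(hnorm2 (x i)) h1 mulr1.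
have Hrow : forall j, \sum_i w i * n j i = 1.
  move=> j.
  have K : forall a b, qre (qmul (qmul (qconj (x j a)) (if a == b then q1 R else q0 R)) (x j b))
       = \sum_i w i * qre (qmul (qmul (qconj (x j a)) (x i a)) (qmul (qconj (x i b)) (x j b))).
    move=> a b; rewrite -h3.
    rewrite (@bigq_morph R (fun H => qre (qmul (qmul (qconj (x j a)) H) (x j b)))); first last.
    - by rewrite /qmul /qconj /q0 /=; ring.
    - by move=> p q; rewrite /qmul /qconj /qadd /=; ring.
    apply: eq_bigr => i _; rewrite /qscale /qmul /qconj /=; ring.
  have L : \sum_a \sum_b qre (qmul (qmul (qconj (x j a)) (if a == b then q1 R else q0 R)) (x j b)) = 1.
    rewrite -(h1 j) /hnorm2; apply: eq_bigr => a _.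
    rewrite (bigD1 a) //= big1 ?addr0.
      by rewrite eqxx /qmul /qconj /qnorm2 /q1 /=; ring.
    move=> b; rewrite eq_sym => /negbTE ->; rewrite /qmul /qconj /q0 /=; ring.
  rewrite -[RHS]L; symmetry.
  transitivity (\sum_(a < d) \sum_(b < d) \sum_i w i * qre (qmul (qmul (qconj (x j a)) (x i a)) (qmul (qconj (x i b)) (x j b)))).
    by apply: eq_bigr => a _; apply: eq_bigr => b _; exact: K.
  under eq_bigr do rewrite exchange_big /=.
  rewrite exchange_big /=; apply: eq_bigr => i _.
  rewrite /n qnorm2_hinner mulr_sumr; apply: eq_bigr => a _.
  rewrite mulr_sumr; apply: eq_bigr => b _.
  by rewrite /qmul /qconj /=; ring.
pose i0 : 'I_N := Ordinal hN.
case: (ltnP 1 N) => HN; last first.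
  exfalso.
  have HN1 : N = 1%N by apply/eqP; rewrite eqn_leq HN hN.
  have E : forall i : 'I_N, i = i0 by move=> i; apply/val_inj => /=; have := ltn_ord i; rewrite {2}HN1 ltnS leqn0 => /eqP.
  have Hr := Hrow i0.
  rewrite (bigD1 i0) //= big1 in Hr; last by move=> i; rewrite (E i) eqxx.
  rewrite (bigD1 i0) //= big1 in Htr; last by move=> i; rewrite (E i) eqxx.
  rewrite Hdiag mulr1 addr0 in Hr; rewrite addr0 Hr in Htr.
  by move: hd; rewrite -(ltr_nat R) -Htr ltxx.
pose i1 : 'I_N := Ordinal HN.
pose j0 : 'I_N := Ordinal (ltn_trans (ltnSn 0) HN).
pose c := n j0 i1.
have Hoff : forall i j, i != j -> n i j = c.
  move=> i j hij; rewrite /c /n; case: (ltngtP i j) => H.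
  - by apply: h2.
  - by rewrite -/(n i j) Hsym; apply: h2.
  - by move/eqP: hij; case; apply/val_inj.
have Hj : forall j, w j + c * (d%:R - w j) = 1.
  move=> j; rewrite -[RHS](Hrow j) (bigD1 j) //= Hdiag mulr1; congr (_ + _).
  rewrite -Htr (bigD1 j) //= addrC addrK mulr_sumr.
  by apply: eq_bigr => i hi; rewrite Hoff 1?mulrC // eq_sym.
have Hd1 : 1 < d%:R :> R by rewrite ltr1n.
have Hc1 : 1 - c != 0.
  apply/eqP => H; have Hc : c = 1 by apply/eqP; rewrite -subr_eq0 -opprB H oppr0.
  have := Hj i0; rewrite Hc mul1r addrC subrK => H'.
  by move: Hd1; rewrite H' ltxx.
have Hw : forall j, w j = (1 - c * d%:R) / (1 - c).
  move=> j; rewrite -[w j](mulfK Hc1); congr (_ / _).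
  apply/eqP; rewrite -subr_eq0; apply/eqP.
  transitivity ((w j + c * (d%:R - w j)) - 1); first by ring.
  by rewrite Hj subrr.
have HN0 : (N%:R : R) != 0 by rewrite pnatr_eq0 -lt0n.
pose w0 := (1 - c * d%:R) / (1 - c).
have Hs : w0 * N%:R = d%:R.
  rewrite -Htr (eq_bigr (fun _ => w0)); last by move=> i _; rewrite Hw.
  by rewrite sumr_const card_ord mulr_natr.
have Hw2 : forall j, w j = d%:R / N%:R.
  by move=> j; rewrite Hw -/w0 -Hs mulfK.
split; first exact: Hw2.
have HN1 : 0 < N%:R - 1 :> R by rewrite subr_gt0 ltr1n.
have HdN : (d%:R * (N%:R - 1) : R) != 0.
  by rewrite mulf_neq0 // ?gt_eqF // (lt_trans ltr01 Hd1).
have Hcv : c = (N%:R - d%:R) / (d%:R * (N%:R - 1)).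
  rewrite -[c](mulfK HdN); congr (_ / _).
  apply/eqP; rewrite -subr_eq0; apply/eqP.
  have := Hj i0; rewrite Hw2 => H.
  transitivity (N%:R * ((d%:R / N%:R + c * (d%:R - d%:R / N%:R)) - 1)); last by rewrite H subrr mulr0.
  by field.
split; first exact: h1.
split; last by move=> i j hij; rewrite -/(n i j) Hoff // Hcv.
move=> i j hij Hl.
have := @hinner_line R _ _ _ (h1 i) (h1 j) Hl; rewrite -/(n i j) Hoff // => Hc.
by move: Hc1; rewrite Hc subrr eqxx.
Qed.
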